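(* Let $V$ be a vertex operator algebra, fix $n\in\mathbb{N}$, and let $u\in V$ be an element of weight $\mathrm{wt}\,u\ge -n$ such that the vertex subalgebra $V^u=\langle u\rangle^1$ satisfies the permutation property. Then $A_n^u$ is generated by the elements \[ u_{-2n-1}^{i_{2n+1}}u_{-2n}^{i_{2n}}\cdots u_{-1}^{i_1}\mathbf{1}+O_n(V),\qquad i_1,\dots,i_{2n+1}\in\mathbb{N}. \] Moreover, if $V^u$ acts strongly on a subset $W\subset V$, then every element of $A_n^u.W$ can be written, modulo $O_n^\circ(V)$, as a linear combination of elements $u_{-2n-1}^{i_{2n+1}}u_{-2n}^{i_{2n}}\cdots u_{-1}^{i_1}v+O_n(V)$ with $v\in W$ and $i_1,\dots,i_{2n+1}\in\mathbb{N}$.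
   Context: $V$ has vacuum $\mathbf{1}$, modes $Y(v,x)=\sum v_kx^{-k-1}$, Virasoro operators $L(m)$, weights $\mathrm{wt}$. For homogeneous $a$, $a\circ_nb=\mathrm{Res}_x(1+x)^{\mathrm{wt}\,a+n}Y(a,x)b\,x^{-2n-2}$; $O_n^\circ(V)=\mathrm{span}\{a\circ_nb\}$, $O^L(V)=\{(L(-1)+L(0))v\}$, $O_n(V)=O^L(V)+O_n^\circ(V)$, and $A_n(V)=V/O_n(V)$ is the level $n$ Zhu algebra with product $a*_nb=\sum_{m=0}^n(-1)^m\binom{m+n}{n}\mathrm{Res}_x(1+x)^{\mathrm{wt}\,a+n}Y(a,x)b\,x^{-n-m-1}$. $V^u=\langle u\rangle^1$ is the span of all $u_{-k_1}\cdots u_{-k_r}\mathbf{1}$ ($r\in\mathbb{N}$, $k_i\in\mathbb{Z}_+$), assumed to be a vertex subalgebra. For $v\in V$, $F_r(v)$ is the span of $u_{-k_1}\cdots u_{-k_p}v$ with $p\le r$ and $k_i\ge1$. The permutation property for $V^u$ acting on $W$ means: for all $m\in\mathbb{Z}_+$, permutations $\sigma$ of $\{1,\dots,m\}$, $u^{(1)},\dots,u^{(m)}\in V^u$, $v\in W$ and $k_1,\dots,k_m\in\mathbb{Z}$, $u^{(1)}_{-k_1}\cdots u^{(m)}_{-k_m}v-u^{(\sigma(1))}_{-k_{\sigma(1)}}\cdots u^{(\sigma(m))}_{-k_{\sigma(m)}}v\in F_{m-1}(v)$; ''$V^u$ satisfies the permutation property'' means this with $W=V^u$. $V^u$ acts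 strongly on $W$ if it satisfies the permutation property on $W$ and $a_jw=0$ for all $a\in V^u$, $w\in W$, $j\ge0$. $A_n^u$ is the subalgebra of $A_n(V)$ generated by $\{a+O_n(V):a\in V^u\}$, and $A_n^u.W$ is the set of elements $u_{-k_1}\cdots u_{-k_m}v+O_n(V)$ with $v\in W$, $m\in\mathbb{N}$, $k_i\in\mathbb{Z}_+$. *)

(* Defs.v *)
From HB Require Import structures.
Set Warnings "-notation-overridden,-ambiguous-paths".
From mathcomp Require Import all_boot all_order all_algebra all_fingroup.
Set Implicit Arguments.
Unset Strict Implicit.
Unset Printing Implicit Defensive.
Import Order.TTheory GRing.Theory Num.Theory.
Local Open Scope ring_scope.

Inductive Span (K : numClosedFieldType) (V : lmodType K) (P : V -> Prop) : V -> Prop :=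
| Span0 : Span P 0
| SpanIn x : P x -> Span P x
| SpanLC (c : K) x y : Span P x -> Span P y -> Span P (c *: x + y).

Definition binz {K : numClosedFieldType} (z : int) (i : nat) : K :=
  (\prod_(j < i) (z%:~R - j%:R)) / (i`!)%:R.

(* A vertex operator algebra: modes a_m (Y(a,x) = sum a_m x^{-m-1}), vacuum,
   conformal vector omega with L(m) = omega_(m+1), central charge cc,
   Z-grading by L(0)-eigenvalue given by projections gproj k onto V_k
   (with a finite support list gsupp v), a truncation bound trunc a b. *)
Record VOA (K : numClosedFieldType) : Type := MkVOA {
  vspace :> lmodType K;
  mode : vspace -> int -> vspace -> vspace;
  vac : vspace;
  omega : vspace;
  cc : K;
  gproj : int -> vspace -> vspace;
  gsupp : vspace -> seq int;
  trunc : vspace -> vspace -> nat;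
  mode_linl : forall m b (c : K) a1 a2,
      mode (c *: a1 + a2) m b = c *: mode a1 m b + mode a2 m b;
  mode_linr : forall a m (c : K) b1 b2,
      mode a m (c *: b1 + b2) = c *: mode a m b1 + mode a m b2;
  trunc_spec : forall a b (m : int), (trunc a b)%:Z <= m -> mode a m b = 0;
  vac_mode : forall m v, mode vac m v = if m == -1 then v else 0;
  mode_vac_create : forall a, mode a (-1) vac = a;
  mode_vac_pos : forall a (m : int), 0 <= m -> mode a m vac = 0;
  borcherds : forall a b c (l m n : int) (N : nat),
    (forall i : nat, (N <= i)%N ->
       [/\ mode a (l + i%:Z) b = 0, mode b (n + i%:Z) c = 0
         & mode a (m + i%:Z) c = 0]) ->
    \sum_(i < N) binz m i *: mode (mode a (l + i%:Z) b) (m + n - i%:Z) c =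
    \sum_(i < N) ((-1) ^+ i * binz l i) *:
       (mode a (l + m - i%:Z) (mode b (n + i%:Z) c)
        - (-1) ^+ `|l|%N *: mode b (l + n - i%:Z) (mode a (m + i%:Z) c));
  virasoro : forall (m n : int) v,
    mode omega (m + 1) (mode omega (n + 1) v)
    - mode omega (n + 1) (mode omega (m + 1) v)
    = (m - n)%:~R *: mode omega (m + n + 1) v
      + (if m + n == 0 then (m ^+ 3 - m)%:~R / 12%:R * cc else 0) *: v;
  translation : forall a (m : int) v,
    mode (mode omega 0 a) m v = (- m)%:~R *: mode a (m - 1) v;
  gproj_lin : forall k (c : K) x y,
    gproj k (c *: x + y) = c *: gproj k x + gproj k y;
  gproj_orth : forall j k v,
    gproj j (gproj k v) = if j == k then gproj k v else 0;
  gsupp_uniq : forall v, uniq (gsupp v);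
  gsupp_sum : forall v, v = \sum_(k <- gsupp v) gproj k v;
  gsupp_out : forall v k, k \notin gsupp v -> gproj k v = 0;
  L0_wt : forall k v, mode omega 1 (gproj k v) = k%:~R *: gproj k v;
  gfin : forall k, exists s : seq vspace,
    forall v, Span (fun x => x \in s) (gproj k v);
  gbelow : exists N : int, forall k v, k < N -> gproj k v = 0;
  vac_wt : gproj 0 vac = vac;
  omega_wt : gproj 2 omega = omega
}.

Section VOADefs.
Variables (K : numClosedFieldType) (V : VOA K).

Definition homog (k : int) (a : V) : Prop := gproj k a = a.

(* a o_n b for a homogeneous of weight k *)
Definition circ_hom (n : nat) (k : int) (a b : V) : V :=
  \sum_(i < trunc a b + 2 * n + 2)
     binz (k + n%:Z) i *: mode a (i%:Z - (2 * n + 2)%:Z) b.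

(* a *_n b for a homogeneous of weight k *)
Definition star_hom (n : nat) (k : int) (a b : V) : V :=
  \sum_(m < n.+1) ((-1) ^+ m * ('C(m + n, n))%:R) *:
    \sum_(i < trunc a b + n + m + 1)
       binz (k + n%:Z) i *: mode a (i%:Z - (n + m + 1)%:Z) b.

(* linear extension in the first argument via the grading *)
Definition star (n : nat) (a b : V) : V :=
  \sum_(k <- gsupp a) star_hom n k (gproj k a) b.

Definition Ocirc (n : nat) : V -> Prop :=
  Span (fun v => exists k a b, homog k a /\ v = circ_hom n k a b).

Definition OL (v : V) : Prop :=
  exists w, v = mode (omega V) 0 w + mode (omega V) 1 w.

Definition On (n : nat) (v : V) : Prop :=
  exists x y, OL x /\ Ocirc n y /\ v = x + y.

(* preimage in V of the subalgebra of A_n(V) generated by the classes of X *)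
Inductive GenAlg (n : nat) (X : V -> Prop) : V -> Prop :=
| GA_O v : On n v -> GenAlg n X v
| GA_gen v : X v -> GenAlg n X v
| GA_one : GenAlg n X (vac V)
| GA_lc (c : K) x y : GenAlg n X x -> GenAlg n X y -> GenAlg n X (c *: x + y)
| GA_mul x y : GenAlg n X x -> GenAlg n X y -> GenAlg n X (star n x y).

(* u_{-(k1+1)} ... u_{-(kr+1)} v *)
Definition monom (u : V) (ks : seq nat) (v : V) : V :=
  foldr (fun k w => mode u (- (k.+1)%:Z) w) v ks.

Definition Vu (u : V) : V -> Prop :=
  Span (fun v => exists ks, v = monom u ks (vac V)).

Definition Fr (u : V) (r : nat) (v : V) : V -> Prop :=
  Span (fun w => exists ks, (size ks <= r)%N /\ w = monom u ks v).

Definition gmon (ps : seq (V * int)) (v : V) : V :=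
  foldr (fun p w => mode p.1 (- p.2) w) v ps.

Definition perm_prop (u : V) (W : V -> Prop) : Prop :=
  forall (m : nat) (s : 'S_m) (us : 'I_m -> V) (ks : 'I_m -> int) (v : V),
    (0 < m)%N -> (forall i, Vu u (us i)) -> W v ->
    Fr u m.-1 v (gmon [seq (us i, ks i) | i <- enum 'I_m] v
                 - gmon [seq (us (s i), ks (s i)) | i <- enum 'I_m] v).

Definition acts_strongly (u : V) (W : V -> Prop) : Prop :=
  perm_prop u W /\
  forall a w (j : int), Vu u a -> W w -> 0 <= j -> mode a j w = 0.

(* pm j [i_{j+1}; i_{j+2}; ...] v = ... u_{-(j+2)}^{i_{j+2}} u_{-(j+1)}^{i_{j+1}} v *)
Fixpoint pm (u : V) (j : nat) (ii : seq nat) (v : V) : V :=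
  match ii with
  | [::] => v
  | i :: ii' => pm u j.+1 ii' (iter i (mode u (- (j.+1)%:Z)) v)
  end.

(* pmon u [i_1; ...; i_N] v = u_{-N}^{i_N} ... u_{-1}^{i_1} v *)
Definition pmon (u : V) (ii : seq nat) (v : V) : V := pm u 0 ii v.

End VOADefs.

(* Main.v *)
Require Import Defs.
From HB Require Import structures.
Set Warnings "-notation-overridden,-ambiguous-paths".
From mathcomp Require Import all_boot all_order all_algebra all_fingroup.
From mathcomp Require Import zify ring.
Set Implicit Arguments.
Unset Strict Implicit.
Unset Printing Implicit Defensive.
Import Order.TTheory GRing.Theory Num.Theory.
Local Open Scope ring_scope.

Lemma zero_of_dbl (K : numClosedFieldType) (W : lmodType K) (x : W) : x = x + x -> x = 0.
Proof. move=> h; apply: (@addrI _ x); rewrite addr0; exact: (esym h). Qed.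

Lemma mode0r K (V : VOA K) (a : V) m : mode a m 0 = 0.
Proof.
apply: zero_of_dbl; have := mode_linr a m 1 0 0; by rewrite !scale1r addr0.
Qed.

Lemma mode0l K (V : VOA K) (b : V) m : mode 0 m b = 0.
Proof.
apply: zero_of_dbl; have := mode_linl m b 1 (0 : V) 0; by rewrite !scale1r addr0.
Qed.

Lemma modeZr K (V : VOA K) (a : V) m c b : mode a m (c *: b) = c *: mode a m b.
Proof. by have := mode_linr a m c b 0; rewrite !addr0 mode0r addr0. Qed.

Lemma modeDr K (V : VOA K) (a : V) m b1 b2 : mode a m (b1 + b2) = mode a m b1 + mode a m b2.
Proof. by have := mode_linr a m 1 b1 b2; rewrite !scale1r. Qed.

Lemma modeNr K (V : VOA K) (a : V) m b : mode a m (- b) = - mode a m b.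
Proof. by rewrite -scaleN1r modeZr scaleN1r. Qed.

Lemma modeBr K (V : VOA K) (a : V) m b1 b2 : mode a m (b1 - b2) = mode a m b1 - mode a m b2.
Proof. by rewrite modeDr modeNr. Qed.

Lemma mode_sumr K (V : VOA K) (a : V) m (I : Type) (r : seq I) (P : pred I) (F : I -> V) :
  mode a m (\sum_(i <- r | P i) F i) = \sum_(i <- r | P i) mode a m (F i).
Proof. exact: (big_morph (mode a m) (modeDr a m) (mode0r a m)). Qed.

Lemma gproj0 K (V : VOA K) k : @gproj _ V k 0 = 0.
Proof.
apply: zero_of_dbl; have := @gproj_lin _ V k 1 0 0; by rewrite !scale1r addr0.
Qed.

Lemma gprojZ K (V : VOA K) k c (b : V) : @gproj _ V k (c *: b) = c *: @gproj _ V k b.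
Proof. by have := @gproj_lin _ V k c b 0; rewrite !addr0 gproj0 addr0. Qed.

Lemma gprojD K (V : VOA K) k (b1 b2 : V) : @gproj _ V k (b1 + b2) = @gproj _ V k b1 + @gproj _ V k b2.
Proof. by have := @gproj_lin _ V k 1 b1 b2; rewrite !scale1r. Qed.

Lemma gproj_sum K (V : VOA K) k (I : Type) (r : seq I) (P : pred I) (F : I -> V) :
  @gproj _ V k (\sum_(i <- r | P i) F i) = \sum_(i <- r | P i) @gproj _ V k (F i).
Proof. exact: (big_morph (@gproj _ V k) (@gprojD _ V k) (@gproj0 _ V k)). Qed.

Lemma sum_if_eq (K : numClosedFieldType) (W : lmodType K) (s : seq int) (j : int) (F : int -> W) :
  uniq s -> \sum_(k <- s) (if k == j then F k else 0) = if j \in s then F j else 0.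
Proof.
move=> us; case: ifP => js.
  rewrite (bigD1_seq j) //= eqxx big1 ?addr0 // => k /negbTE -> //.
rewrite big1_seq // => k /andP[_ ks]; case: eqP => // e; by rewrite -e ks in js.
Qed.

Lemma gproj_L0 K (V : VOA K) j (v : V) :
  @gproj _ V j (mode (omega V) 1 v) = j%:~R *: @gproj _ V j v.
Proof.
have us := gsupp_uniq v.
transitivity (@gproj _ V j (mode (omega V) 1 (\sum_(k <- gsupp v) @gproj _ V k v))).
  by rewrite -gsupp_sum.
rewrite mode_sumr gproj_sum.
under eq_bigr => k _ do rewrite L0_wt gprojZ gproj_orth.
transitivity (\sum_(k <- gsupp v) (if k == j then j%:~R *: @gproj _ V j v else 0)).
  apply: eq_bigr => k _; rewrite eq_sym; case: eqP => [->|] //; by rewrite scaler0.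
rewrite sum_if_eq //; case: ifP => // nin; by rewrite gsupp_out ?nin // scaler0.
Qed.

Lemma eigen_homog K (V : VOA K) (k : int) (x : V) :
  mode (omega V) 1 x = k%:~R *: x -> homog k x.
Proof.
move=> h; rewrite /homog.
have z : forall j, j != k -> @gproj _ V j x = 0.
  move=> j jk; have := gproj_L0 j x; rewrite h gprojZ => /eqP.
  rewrite -subr_eq0 -scalerBl scaler_eq0 -intrB intr_eq0 subr_eq0 eq_sym (negbTE jk) /=.
  by move/eqP.
rewrite {2}(gsupp_sum x).
transitivity (\sum_(j <- gsupp x) (if j == k then @gproj _ V j x else 0)).
  by rewrite sum_if_eq ?gsupp_uniq //; case: ifP => // nin; rewrite gsupp_out // nin.
apply: eq_bigr => j _; case: eqP => // /eqP jk; by rewrite z.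
Qed.

Lemma homog_L1 K (V : VOA K) (w : int) (a : V) :
  homog w a -> homog (w + 1) (mode (omega V) 0 a).
Proof.
move=> ha; apply: eigen_homog.
have := @virasoro _ V 0 (-1) a.
rewrite add0r addNr sub0r oppr_eq0 oner_eq0 /= scale0r addr0.
rewrite (_ : 1%:~R = 1 :> K) // scale1r.
have -> : mode (omega V) 1 a = w%:~R *: a by rewrite -{1}ha L0_wt ha.
rewrite modeZr => /eqP; rewrite subr_eq => /eqP ->.
by rewrite intrD scalerDl scale1r addrC.
Qed.

Lemma Span_add (K : numClosedFieldType) (W : lmodType K) (P : W -> Prop) x y :
  Span P x -> Span P y -> Span P (x + y).
Proof. by move=> hx hy; rewrite -[x]scale1r; apply: SpanLC. Qed.

Lemma Span_scale (K : numClosedFieldType) (W : lmodType K) (P : W -> Prop) c x :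
  Span P x -> Span P (c *: x).
Proof. by move=> hx; rewrite -[_ *: _]addr0; apply: SpanLC => //; apply: Span0. Qed.

Lemma Span_opp (K : numClosedFieldType) (W : lmodType K) (P : W -> Prop) x :
  Span P x -> Span P (- x).
Proof. by move=> hx; rewrite -scaleN1r; apply: Span_scale. Qed.

Lemma Span_sub (K : numClosedFieldType) (W : lmodType K) (P : W -> Prop) x y :
  Span P x -> Span P y -> Span P (x - y).
Proof. by move=> hx hy; apply: Span_add => //; apply: Span_opp. Qed.

Lemma sum_ext (K : numClosedFieldType) (W : lmodType K) (F : nat -> W) N d :
  (forall i, (N <= i)%N -> F i = 0) -> \sum_(i < N + d) F i = \sum_(i < N) F i.
Proof.
move=> h; elim: d => [|d IH]; first by rewrite addn0.
by rewrite addnS big_ord_recr /= h ?leq_addr // addr0.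
Qed.

Definition Ssum K (V : VOA K) (a : V) (p : int) (q N : nat) (b : V) : V :=
  \sum_(i < N) binz p i *: mode a (i%:Z - q%:Z) b.

Lemma S_ext K (V : VOA K) (a b : V) p q N :
  (trunc a b + q <= N)%N -> Ssum a p q N b = Ssum a p q (trunc a b + q) b.
Proof.
move=> h; rewrite /Ssum -(subnKC h) (@sum_ext _ _ (fun i : nat => binz p i *: mode a (i%:Z - q%:Z) b)) // => i hi.
by rewrite trunc_spec ?scaler0 //; lia.
Qed.

Lemma binz0 (K : numClosedFieldType) p : binz p 0 = 1 :> K.
Proof. by rewrite /binz big_ord0 fact0 mulr1n invr1 mulr1. Qed.

Lemma binzS (K : numClosedFieldType) p i :
  binz p i.+1 * (i.+1)%:R = p%:~R * binz (p - 1) i :> K.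
Proof.
rewrite /binz big_ord_recl factS natrM.
have -> : \prod_(j < i) (p%:~R - (bump 0 j)%:R) = \prod_(j < i) ((p - 1)%:~R - j%:R) :> K.
  apply: eq_bigr => j _; rewrite /bump /= add1n intrB; ring.
have h1 : (i`!)%:R != 0 :> K by rewrite pnatr_eq0 -lt0n fact_gt0.
have h2 : (i.+1)%:R != 0 :> K by rewrite pnatr_eq0.
rewrite subr0; field; by rewrite h1 addrC natr1 h2.
Qed.

Lemma S_L1 K (V : VOA K) (a b : V) p q N : (trunc a b + q.+1 <= N)%N ->
  Ssum (mode (omega V) 0 a) p q N b
  = - p%:~R *: Ssum a (p - 1) q N b + q%:R *: Ssum a p q.+1 N b.
Proof.
move=> hN; rewrite /Ssum.
pose F1 i := binz p i *: ((q%:Z - i%:Z)%:~R *: mode a (i%:Z - (q.+1)%:Z) b).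
pose F3 i := binz p i *: mode a (i%:Z - (q.+1)%:Z) b.
have z1 : forall i, (N <= i)%N -> F1 i = 0.
  by move=> i hi; rewrite /F1 trunc_spec ?scaler0 //; lia.
have z3 : forall i, (N <= i)%N -> F3 i = 0.
  by move=> i hi; rewrite /F3 trunc_spec ?scaler0 //; lia.
transitivity (\sum_(i < N) F1 i).
  apply: eq_bigr => i _; rewrite /F1 translation.
  have -> : (i%:Z - q%:Z - 1) = i%:Z - (q.+1)%:Z by lia.
  by congr (_ *: (_ *: _)); congr (_%:~R); lia.
rewrite -(@sum_ext _ _ F1 N 1 z1) -(@sum_ext _ _ F3 N 1 z3) !addn1 !big_ord_recl.
rewrite scalerDr !scaler_sumr addrCA -big_split /=.
congr (_ + _).
  rewrite /F1 /F3 !scalerA subr0; congr (_ *: _); rewrite mulrC; congr (_ * _).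
apply: eq_bigr => i _; rewrite /F1 /F3 /bump /= add1n.
have -> : (i.+1)%:Z - (q.+1)%:Z = i%:Z - q%:Z by lia.
rewrite !scalerA -scalerDl; congr (_ *: _).
rewrite mulNr -binzS intrB -!pmulrn; ring.
Qed.

Lemma Qlem K (V : VOA K) (n m : nat) : forall (w : int) (a b : V) N, homog w a ->
  (trunc a b + (2 * n + 2 + m) <= N)%N ->
  Ocirc n (Ssum a (w + n%:Z + m%:Z) (2 * n + 2 + m) N b).
Proof.
elim: m => [|m IH] w a b N ha hN.
  rewrite addr0 addn0 S_ext; last by rewrite addn0 in hN.
  apply: SpanIn; exists w, a, b; split => //.
  by rewrite /Ssum /circ_hom !addnA.
set q := (2 * n + 2 + m)%N.
pose N' := (N + trunc (mode (omega V) 0 a) b + q)%N.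
have H1 := IH (w + 1) (mode (omega V) 0 a) b N' (homog_L1 ha) ltac:(rewrite /N' /q; lia).
have H2 : Ocirc n (Ssum a (w + n%:Z + m%:Z) q N' b).
  apply: IH => //; rewrite /N' /q; rewrite addnS in hN; lia.
have hN' : (trunc a b + q.+1 <= N')%N by rewrite /N' /q; rewrite addnS in hN; lia.
have E := S_L1 (w + 1 + n%:Z + m%:Z) hN'.
have ep : w + n%:Z + (m.+1)%:Z = w + 1 + n%:Z + m%:Z by lia.
have ep1 : w + 1 + n%:Z + m%:Z - 1 = w + n%:Z + m%:Z by lia.
rewrite ep1 in E.
rewrite addnS -/q ep S_ext; last by rewrite addnS in hN.
rewrite -(S_ext (w + 1 + n%:Z + m%:Z) hN').
have qn0 : (q%:R : K) != 0 by rewrite pnatr_eq0 /q; lia.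
have -> : Ssum a (w + 1 + n%:Z + m%:Z) q.+1 N' b =
  (q%:R)^-1 *: (Ssum (mode (omega V) 0 a) (w + 1 + n%:Z + m%:Z) q N' b
                 + (w + 1 + n%:Z + m%:Z)%:~R *: Ssum a (w + n%:Z + m%:Z) q N' b).
  rewrite E scaleNr [X in _ *: X]addrAC addNr add0r scalerA mulVf // scale1r.
  by [].
apply: Span_scale; apply: Span_add => //; exact: Span_scale.
Qed.

Fixpoint ksof (j : nat) (ii : seq nat) : seq nat :=
  match ii with
  | [::] => [::]
  | i :: ii' => ksof j.+1 ii' ++ nseq i j
  end.

Lemma monom_cat K (V : VOA K) (u : V) s1 s2 v :
  monom u (s1 ++ s2) v = monom u s1 (monom u s2 v).
Proof. by rewrite /monom foldr_cat. Qed.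

Lemma iter_monom K (V : VOA K) (u : V) i j v :
  iter i (mode u (- (j.+1)%:Z)) v = monom u (nseq i j) v.
Proof. by elim: i => //= i ->. Qed.

Lemma pm_monom K (V : VOA K) (u : V) ii : forall j v, pm u j ii v = monom u (ksof j ii) v.
Proof.
elim: ii => [|i ii IH] j v //=.
by rewrite IH iter_monom monom_cat.
Qed.

Lemma pm_zeros K (V : VOA K) (u : V) k : forall j v, pm u j (nseq k 0%N) v = v.
Proof. by elim: k => [|k IH] j v //=; rewrite IH. Qed.

Lemma count_ksof (ks : seq nat) len : forall j0 x,
  count_mem x (ksof j0 [seq count_mem j ks | j <- iota j0 len])
  = ((j0 <= x < j0 + len) * count_mem x ks)%N.
Proof.
elim: len => [|len IH] j0 x /=.
  by rewrite addn0 ltnNge andbN.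
rewrite count_cat IH count_nseq /=.
case: (eqVneq x j0) => [->|ne].
  by rewrite ltnn /= leqnn addnS ltnS leq_addr /= mul0n add0n mul1n.
have -> : (j0.+1 <= x)%N = (j0 <= x)%N by rewrite ltn_neqAle eq_sym ne.
by rewrite addSnnS /= mul0n addn0.
Qed.

Lemma monom0 K (V : VOA K) (u : V) ks : monom u ks 0 = 0.
Proof. by elim: ks => //= k ks ->; rewrite mode0r. Qed.

Lemma monom_gmon K (V : VOA K) (u : V) ks v :
  monom u ks v = gmon [seq (u, (k.+1)%:Z) | k <- ks] v.
Proof. by elim: ks => //= k ks ->. Qed.

Lemma gmon_perm K (V : VOA K) (u : V) (W : V -> Prop) (Hp : perm_prop u W)
  (L L' : seq (V * int)) v :
  perm_eq L' L -> (0 < size L)%N -> (forall p, p \in L -> Vu u p.1) -> W v ->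
  Fr u (size L).-1 v (gmon L v - gmon L' v).
Proof.
move=> hp hs hv hw.
have /tuple_permP [p ->] : perm_eq L' (in_tuple L) by [].
have := Hp (size L) p (fun i => (tnth (in_tuple L) i).1) (fun i => (tnth (in_tuple L) i).2) v hs
   (fun i => hv _ (mem_tnth i (in_tuple L))) hw.
have e1 : [seq ((tnth (in_tuple L) i).1, (tnth (in_tuple L) i).2) | i <- enum 'I_(size L)] = L.
  rewrite -[RHS](map_tnth_enum (in_tuple L)); apply: eq_map => i; by case: (tnth _ i).
rewrite e1.
have e2 : [seq ((tnth (in_tuple L) (p i)).1, (tnth (in_tuple L) (p i)).2) | i <- enum 'I_(size L)]
   = [tuple tnth (in_tuple L) (p i) | i < size L].
  rewrite /=; apply: eq_map => i; by case: (tnth _ _).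
by rewrite e2.
Qed.

Definition PP K (V : VOA K) (n : nat) (G : V -> Prop) (y : V) :=
  exists x, Span G x /\ Ocirc n (y - x).

Lemma PP_lc K (V : VOA K) n (G : V -> Prop) c y1 y2 :
  PP n G y1 -> PP n G y2 -> PP n G (c *: y1 + y2).
Proof.
move=> [x1 [h1 o1]] [x2 [h2 o2]]; exists (c *: x1 + x2); split; first exact: SpanLC.
have -> : c *: y1 + y2 - (c *: x1 + x2) = c *: (y1 - x1) + (y2 - x2).
  by rewrite scalerBr opprD addrACA.
exact: SpanLC.
Qed.

Lemma PP_O K (V : VOA K) n (G : V -> Prop) y : Ocirc n y -> PP n G y.
Proof. by move=> h; exists 0; split; [apply: Span0 | rewrite subr0]. Qed.

Lemma PP_G K (V : VOA K) n (G : V -> Prop) y : G y -> PP n G y.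
Proof. by move=> h; exists y; split; [apply: SpanIn | rewrite subrr; apply: Span0]. Qed.

Lemma PP_0 K (V : VOA K) n (G : V -> Prop) : PP n G 0.
Proof. apply: PP_O; exact: Span0. Qed.

Lemma PP_add K (V : VOA K) n (G : V -> Prop) y1 y2 :
  PP n G y1 -> PP n G y2 -> PP n G (y1 + y2).
Proof. by move=> h1 h2; rewrite -[y1]scale1r; apply: PP_lc. Qed.

Lemma PP_scale K (V : VOA K) n (G : V -> Prop) c y : PP n G y -> PP n G (c *: y).
Proof. by move=> h; rewrite -[_ *: _]addr0; apply: PP_lc => //; apply: PP_0. Qed.

Lemma PP_sub K (V : VOA K) n (G : V -> Prop) y1 y2 :
  PP n G y1 -> PP n G y2 -> PP n G (y1 - y2).
Proof. by move=> h1 h2; apply: PP_add => //; rewrite -scaleN1r; apply: PP_scale. Qed.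

Lemma PP_sum K (V : VOA K) n (G : V -> Prop) N (F : 'I_N -> V) :
  (forall i, PP n G (F i)) -> PP n G (\sum_(i < N) F i).
Proof.
move=> h; apply: (big_ind (PP n G)) => //; [exact: PP_0 | exact: PP_add].
Qed.

Lemma gmon_rcons K (V : VOA K) (L : seq (V * int)) p v :
  gmon (rcons L p) v = gmon L (mode p.1 (- p.2) v).
Proof. by rewrite /gmon foldr_rcons. Qed.

Lemma Vu_u K (V : VOA K) (u : V) : Vu u u.
Proof. apply: SpanIn; exists [:: 0%N]; exact: (esym (mode_vac_create u)). Qed.

Lemma part2 K (V : VOA K) (n : nat) (u : V) (wu : int) (Hhom : homog wu u)
  (W : V -> Prop) (HW : acts_strongly u W) :
  forall r ks v, (size ks <= r)%N -> W v ->
  PP n (fun y => exists (ii : seq nat) (w : V),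
                  [/\ size ii = (2 * n).+1, W w & y = pmon u ii w]) (monom u ks v).
Proof.
case: HW => Hp Hz.
set G := (fun y => _).
elim=> [|r IH] ks v hs Wv.
  case: ks hs => // _; apply: PP_G; exists (nseq (2 * n).+1 0%N), v; split => //.
    by rewrite size_nseq.
  by rewrite /pmon pm_zeros.
case: (leqP (size ks) r) => hr; first exact: IH.
have hsz : size ks = r.+1 by apply/eqP; rewrite eqn_leq hs hr.
have Fr_PP : forall y, Fr u r v y -> PP n G y.
  move=> y; elim=> [|x [ks' [h ->]]|c x y' _ h1 _ h2].
  - exact: PP_0.
  - exact: IH.
  - exact: PP_lc.
have permP : forall ks1 ks2, perm_eq ks1 ks2 -> size ks2 = r.+1 ->
    PP n G (monom u ks1 v) -> PP n G (monom u ks2 v).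
  move=> ks1 ks2 hp hs2 h1.
  have : Fr u r v (monom u ks2 v - monom u ks1 v).
    rewrite !monom_gmon.
    have := @gmon_perm _ _ u W Hp [seq (u, (k.+1)%:Z) | k <- ks2]
                  [seq (u, (k.+1)%:Z) | k <- ks1] v.
    rewrite size_map hs2; apply => //.
    - by rewrite perm_map.
    - by move=> p /mapP [k _ ->]; exact: Vu_u.
  move/Fr_PP => h2; rewrite -[monom u ks2 v](subrK (monom u ks1 v)).
  exact: PP_add.
have posmode : forall rest (j : int), size rest = r -> 0 <= j ->
    Fr u r v (mode u j (monom u rest v)).
  move=> rest j hrest hj.
  have := @gmon_perm _ _ u W Hp ((u, - j) :: [seq (u, (k.+1)%:Z) | k <- rest])
                  (rcons [seq (u, (k.+1)%:Z) | k <- rest] (u, - j)) v.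
  rewrite /= size_map hrest => h.
  have hpe : perm_eq (rcons [seq (u, (k.+1)%:Z) | k <- rest] (u, - j))
                     ((u, - j) :: [seq (u, (k.+1)%:Z) | k <- rest]).
    by rewrite perm_rcons perm_refl.
  have := h hpe isT.
  have hv : forall p : V * int,
     p \in (u, - j) :: [seq (u, (k.+1)%:Z) | k <- rest] -> Vu u p.1.
    by move=> p; rewrite inE => /orP [/eqP -> | /mapP [k _ ->]]; exact: Vu_u.
  move/(_ hv Wv); rewrite opprK gmon_rcons /= opprK (Hz u v j (Vu_u u) Wv hj).
  by rewrite -!monom_gmon monom0 subr0.
suff main : forall s ks, size ks = r.+1 -> (sumn ks < s)%N -> PP n G (monom u ks v).
  exact: (main (sumn ks).+1).
elim=> [//|s IHs] {}ks {hs hr}hsz hsum.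
case: (boolP (all (fun k => k < (2 * n).+1)%N ks)) => hall.
  pose ii := [seq count_mem j ks | j <- iota 0 (2 * n).+1].
  apply: (permP (ksof 0 ii)) => //.
    apply/allP => x _; have := count_ksof ks (2 * n).+1 0 x.
    rewrite add0n /= => ->.
    case: (ltnP x (2 * n).+1) => hx //=; rewrite ?mul1n //.
    rewrite mul0n; apply/eqP; apply/esym/eqP; rewrite -leqn0 leqNgt -has_count.
    apply/hasP => -[y yin /eqP ey]; subst y.
    by move/allP: hall => /(_ _ yin); rewrite ltnNge hx.
  rewrite -pm_monom; apply: PP_G; exists ii, v; split => //.
  by rewrite size_map size_iota.
case/allPn: hall => k kin hk.
have hpk := perm_to_rem kin.
set rest := rem k ks in hpk.
have hrest : size rest = r by rewrite size_rem // hsz.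
apply: (permP (k :: rest)); [by rewrite perm_sym | by [] |].
have hsum' : (k + sumn rest < s.+1)%N by rewrite -[(k + _)%N]/(sumn (k :: rest)) -(perm_sumn hpk).
have hk' : (2 * n + 2 + (k - (2 * n).+1) = k.+1)%N by move: hk; rewrite -leqNgt; lia.
have := @Qlem _ V n (k - (2 * n).+1) wu u (monom u rest v) (trunc u (monom u rest v) + k.+1) Hhom.
rewrite hk' => /(_ (leqnn _)).
set p := (wu + n%:Z + (k - (2 * n).+1)%:Z).
rewrite /Ssum addnS big_ord_recl binz0 scale1r /= => hO.
have -> : mode u (- (k.+1)%:Z) (monom u rest v) =
   (mode u ((@ord0 (trunc u (monom u rest v) + k)%N)%:Z - (k.+1)%:Z) (monom u rest v)
     + \sum_(i < trunc u (monom u rest v) + k) binz p (bump 0 i) *: mode u ((bump 0 i)%:Z - (k.+1)%:Z) (monom u rest v))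
   - \sum_(i < trunc u (monom u rest v) + k) binz p (bump 0 i) *: mode u ((bump 0 i)%:Z - (k.+1)%:Z) (monom u rest v).
  by rewrite addrK /= sub0r.
apply: PP_sub; first exact: PP_O.
apply: PP_sum => i; apply: PP_scale.
rewrite /bump /= add1n.
case: (ltnP i k) => hik.
  have -> : (i.+1)%:Z - (k.+1)%:Z = - ((k - i.+1)%N.+1)%:Z by lia.
  have hs1 : size ((k - i.+1)%N :: rest) = r.+1 by rewrite /= hrest.
  have hs2 : (sumn ((k - i.+1)%N :: rest) < s)%N by rewrite /=; lia.
  exact: (IHs _ hs1 hs2).
apply: Fr_PP; apply: posmode => //; lia.
Qed.

Lemma GenAlg_mono K (V : VOA K) n (X Y : V -> Prop) :
  (forall x, X x -> GenAlg n Y x) -> forall v, GenAlg n X v -> GenAlg n Y v.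
Proof.
move=> h v; elim => {v}.
- by move=> v hv; apply: GA_O.
- exact: h.
- exact: GA_one.
- by move=> c x y _ hx _ hy; apply: GA_lc.
- by move=> x y _ hx _ hy; apply: GA_mul.
Qed.

Lemma On_of_Ocirc K (V : VOA K) n (y : V) : Ocirc n y -> On n y.
Proof.
move=> h; exists 0, y; split => //; last by rewrite add0r.
by exists 0; rewrite !mode0r addr0.
Qed.

Theorem proposition3p6 (K : numClosedFieldType) (V : VOA K) (n : nat)
  (u : V) (wu : int) (Hhom : homog wu u) (Hwt : - (n%:Z) <= wu)
  (Hsub : forall a b m, Vu u a -> Vu u b -> Vu u (mode a m b))
  (Hperm : perm_prop u (Vu u)) :
  (forall v : V,
     GenAlg n (Vu u) v <->
     GenAlg n (fun w => exists ii : seq nat,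
                  size ii = (2 * n).+1 /\ w = pmon u ii (vac V)) v)
  /\
  (forall W : V -> Prop, acts_strongly u W ->
     forall (ks : seq nat) (v : V), W v ->
       exists x : V,
         Span (fun y => exists (ii : seq nat) (w : V),
                  [/\ size ii = (2 * n).+1, W w & y = pmon u ii w]) x
         /\ Ocirc n (monom u ks v - x)).
Proof.
split; last first.
  by move=> W HW ks v Wv; exact: (part2 n Hhom HW (leqnn _) Wv).
have HW : acts_strongly u (fun w => w = vac V).
  split.
    move=> m s us ks v Hm Hus ->; apply: Hperm => //.
    by apply: SpanIn; exists [::].
  by move=> a w j _ -> hj; exact: mode_vac_pos.
move=> v; split.
  apply: GenAlg_mono => x; elim => [|y [ks ->]|c x1 y1 _ h1 _ h2].
  - apply: GA_O; apply: On_of_Ocirc; exact: Span0.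
  - have [x' [hx ho]] := part2 n Hhom HW (leqnn (size ks)) (erefl (vac V)).
    have -> : monom u ks (vac V) = 1 *: (monom u ks (vac V) - x') + x'.
      by rewrite scale1r subrK.
    apply: GA_lc; first by apply: GA_O; exact: On_of_Ocirc.
    elim: hx => [|z [ii [w [hs hw ->]]]|c z1 z2 _ g1 _ g2].
    + apply: GA_O; apply: On_of_Ocirc; exact: Span0.
    + by apply: GA_gen; exists ii; rewrite hw.
    + exact: GA_lc.
  - exact: GA_lc.
apply: GenAlg_mono => x [ii [_ ->]]; apply: GA_gen; apply: SpanIn.
by exists (ksof 0 ii); exact: pm_monom.
Qed.
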